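(* Every width-$k$ puzzle that is a USP (in particular every strong USP) has size at most $2^k$.
   Context: A width-$k$ puzzle is a finite set $P \subseteq \{1,2,3\}^k$, of size $|P|$; for $r\in P$, $r_c$ is the $c$-th coordinate. $\mathrm{Sym}(P)$ is the group of permutations of $P$. $P$ is a USP if for all $\pi_1,\pi_2,\pi_3 \in \mathrm{Sym}(P)$, either $\pi_1=\pi_2=\pi_3$, or there exist $r \in P$ and $c \in [k]$ such that at least two of $(\pi_1(r))_c = 1$, $(\pi_2(r))_c = 2$, $(\pi_3(r))_c = 3$ hold. $P$ is a strong USP if the same holds with ''at least two'' replaced by ''exactly two''. *)

(* Defs.v *)
From mathcomp Require Import all_boot all_fingroup.
Set Implicit Arguments. Unset Strict Implicit. Unset Printing Implicit Defensive.

(* Convention: the alphabet {1,2,3} is encoded as 'I_3, with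
   ord 0 <-> 1, ord 1 <-> 2, ord 2 <-> 3.  A row of width k is a
   k.-tuple 'I_3; a width-k puzzle is a (finite) set of rows. *)
Definition row (k : nat) := (k.-tuple 'I_3)%type.
Definition puzzle (k : nat) := {set row k}.

Definition one3 : 'I_3 := @Ordinal 3 0 isT.
Definition two3 : 'I_3 := @Ordinal 3 1 isT.
Definition three3 : 'I_3 := @Ordinal 3 2 isT.

(* The elements of P, as a finite type; Sym(P) = {perm elems P}. *)
Definition elems (k : nat) (P : puzzle k) := {x : row k | x \in P}.

Definition is_USP (k : nat) (P : puzzle k) : Prop :=
  forall pi1 pi2 pi3 : {perm elems P},
    (pi1 = pi2 /\ pi2 = pi3) \/
    exists (r : elems P) (c : 'I_k),
      2 <= (tnth (val (pi1 r)) c == one3)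
           + (tnth (val (pi2 r)) c == two3)
           + (tnth (val (pi3 r)) c == three3).

(* Main.v *)
Require Import Defs.
From mathcomp Require Import all_boot all_fingroup.

Theorem mainTheorem4 (k : nat) (P : puzzle k) :
  is_USP P -> #|P| <= 2 ^ k.
Proof.
move=> H.
pose f (x : elems P) : {set 'I_k} := [set c | tnth (val x) c == one3].
have finj : injective f.
  move=> a b fab; apply/eqP; apply/negPn/negP => nab.
  have [[e1 _]|[r [c Hc]]] := H 1%g (tperm a b) (tperm a b).
    by move: (congr1 (fun p : {perm elems P} => p a) e1); rewrite perm1 tpermL => /eqP; rewrite (negbTE nab).
  set s := tperm a b r in Hc.
  have fs : f s = f r.
    rewrite /s; case: (tpermP a b r) => [->|->|? ?].
    - by rewrite fab.
    - by rewrite fab.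
    - by [].
  move: Hc; rewrite perm1.
  case E: (tnth (val r) c == one3); last first.
    by case: (tnth (val s) c) => [[|[|[|m]]] Hm].
  have : c \in f s by rewrite fs inE E.
  rewrite inE => /eqP ->. by [].
have := leq_card f finj.
rewrite card_sig.
have -> : #|[pred x | x \in P]| = #|P| by apply: eq_card.
move/leq_trans; apply.
have := card_powerset (setT : {set 'I_k}).
rewrite cardsT card_ord => <-.
apply: subset_leq_card; apply/subsetP => A _; rewrite powersetE subsetT.
done.
Qed.
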